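(* Let $\mathcal C$ be a small exact category. The map $\gamma_{0,\mathcal C}:\mathsf{Cob}_0(\mathcal C)\to K_0(\mathcal C)$, $[M]\mapsto\sum_{b\in M}s(b)[X_b]$, is a well-defined isomorphism of abelian groups.
   Context: An exact category is an additive category $\mathcal C$ that is a full additive subcategory of an abelian category $\mathcal A$ with the following property: if $0\to X_1\to X_2\to X_3\to0$ is exact in $\mathcal A$ with $X_1,X_3$ in $\mathcal C$, then $X_2$ is isomorphic to an object of $\mathcal C$. Exact sequences in $\mathcal C$ are those exact sequences of $\mathcal A$ with all terms in $\mathcal C$. $K_0(\mathcal C)$ is generated by $[X]$, $X\in\mathrm{Ob}(\mathcal C)$, with $[X_2]=[X_1]+[X_3]$ for each exact sequence $0\to X_1\to X_2\to X_3\to 0$ in $\mathcal C$. A $\mathcal C$-decorated 0-foam is a finite set of points $b$, each with a sign $s(b)\in\{\pm1\}$ and an object $X_b\in\mathcal C$; $-M$ reverses signs. A $\mathcal C$-decorated 1-foam is a finite oriented graph (loops, multiple edges and circles allowed) with trivalent interior vertices. Each vertex is either ''in'' (two edges in, one out) or ''out'' (one in, two out); the two edges of equal orientation type are thin and the third is thick. The foam carries a flat connection with fibers objects of $\mathcal C$. At each vertex the thin edges are ordered, and an exact sequence $0\to X_{\mathrm{first}}\to X_{\mathrm{thick}}\to X_{\mathrm{second}}\to0$ in $\mathcal C$ of nearby fibers is fixed. Boundary points carry the fiber and sign $+$ if the edge points toward them, $-$ otherwise. A 1-foam $U$ is a cobordism from $M_0$ to $M_1$ if $\partial U\cong M_1\sqcup(-M_0)$.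 $\mathsf{Cob}_0(\mathcal C)$ is the set of $\mathcal C$-decorated 0-foams modulo the equivalence relation generated by cobordism, an abelian group under disjoint union. *)

(* Defs.v *)
From HB Require Import structures.
From mathcomp Require Import all_boot all_order all_algebra.
From Stdlib Require Import Relations.
Unset Printing Implicit Defensive.
Import GRing.Theory.
Local Open Scope ring_scope.

Record preadd := PreAdd {
  Obj : Type;
  Hom : Obj -> Obj -> zmodType;
  comp : forall x y z : Obj, Hom y z -> Hom x y -> Hom x z;
  idm : forall x : Obj, Hom x x
}.
Arguments comp {_ _ _ _} _ _.
Arguments idm {_} _.
Arguments Hom {_} _ _.

Section Abelian.
Context {A : preadd}.

Definition is_zero_obj (Z : Obj A) : Prop :=
  (forall X (f g : Hom Z X), f = g) /\ (forall X (f g : Hom X Z), f = g).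

Definition is_biproduct {X Y P : Obj A} (i1 : Hom X P) (i2 : Hom Y P)
  (p1 : Hom P X) (p2 : Hom P Y) : Prop :=
  [/\ comp p1 i1 = idm X, comp p2 i2 = idm Y, comp p1 i2 = 0, comp p2 i1 = 0
    & comp i1 p1 + comp i2 p2 = idm P].

Definition is_kernel {X Y K : Obj A} (f : Hom X Y) (k : Hom K X) : Prop :=
  comp f k = 0 /\
  forall W (h : Hom W X), comp f h = 0 ->
    exists u : Hom W K, comp k u = h /\ forall u', comp k u' = h -> u' = u.

Definition is_cokernel {X Y Q : Obj A} (f : Hom X Y) (c : Hom Y Q) : Prop :=
  comp c f = 0 /\
  forall W (h : Hom Y W), comp h f = 0 ->
    exists u : Hom Q W, comp u c = h /\ forall u', comp u' c = h -> u' = u.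

Definition is_mono {X Y : Obj A} (f : Hom X Y) : Prop :=
  forall W (g h : Hom W X), comp f g = comp f h -> g = h.
Definition is_epi {X Y : Obj A} (f : Hom X Y) : Prop :=
  forall W (g h : Hom Y W), comp g f = comp h f -> g = h.

Definition is_iso {X Y : Obj A} (f : Hom X Y) : Prop :=
  exists g : Hom Y X, comp g f = idm X /\ comp f g = idm Y.
Definition isomorphic (X Y : Obj A) : Prop := exists f : Hom X Y, is_iso f.

Definition is_abelian : Prop :=
  (forall (w x y z : Obj A) (h : Hom y z) (g : Hom x y) (f : Hom w x),
     comp h (comp g f) = comp (comp h g) f) /\
  (forall (x y : Obj A) (f : Hom x y), comp (idm y) f = f /\ comp f (idm x) = f) /\
  (forall (x y z : Obj A) (g g' : Hom y z) (f f' : Hom x y),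
     comp (g + g') f = comp g f + comp g' f /\
     comp g (f + f') = comp g f + comp g f') /\
  (exists Z, is_zero_obj Z) /\
  (forall X Y, exists P (i1 : Hom X P) (i2 : Hom Y P) p1 p2,
      is_biproduct i1 i2 p1 p2) /\
  (forall X Y (f : Hom X Y), exists K (k : Hom K X), is_kernel f k) /\
  (forall X Y (f : Hom X Y), exists Q (c : Hom Y Q), is_cokernel f c) /\
  (forall X Y (f : Hom X Y), is_mono f -> exists Z (g : Hom Y Z), is_kernel g f) /\
  (forall X Y (f : Hom X Y), is_epi f -> exists Z (g : Hom Z X), is_cokernel g f).

Definition short_exact {X1 X2 X3 : Obj A} (f : Hom X1 X2) (g : Hom X2 X3) : Prop :=
  is_kernel g f /\ is_cokernel f g.

End Abelian.
Arguments is_abelian : clear implicits.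

(* Exact categories: full additive subcategories of an abelian category *)
(* closed under extensions (up to isomorphism).                        *)
Record exact_cat := ExactCat {
  ambient : preadd;
  ambient_abelian : is_abelian ambient;
  inC : Obj ambient -> Prop;
  C_zero : exists Z, inC Z /\ is_zero_obj Z;
  C_biprod : forall X Y, inC X -> inC Y ->
    exists P (i1 : Hom X P) (i2 : Hom Y P) p1 p2, inC P /\ is_biproduct i1 i2 p1 p2;
  C_ext : forall X1 X2 X3 (f : Hom X1 X2) (g : Hom X2 X3),
    inC X1 -> inC X3 -> short_exact f g -> exists X, inC X /\ isomorphic X2 X
}.

Arguments inC {_} _.
Definition CObj (E : exact_cat) := {X : Obj (ambient E) | @inC E X}.
Definition CHom {E : exact_cat} (X Y : CObj E) := Hom (proj1_sig X) (proj1_sig Y).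

Inductive kexpr (E : exact_cat) :=
| kgen of CObj E
| kzero
| kadd of kexpr E & kexpr E
| kopp of kexpr E.
Arguments kzero {E}.
Arguments kgen {E} _.
Arguments kadd {E} _ _.
Arguments kopp {E} _.

Inductive keq {E : exact_cat} : kexpr E -> kexpr E -> Prop :=
| keq_refl a : keq a a
| keq_sym a b : keq a b -> keq b a
| keq_trans a b c : keq a b -> keq b c -> keq a c
| keq_add a a' b b' : keq a a' -> keq b b' -> keq (kadd a b) (kadd a' b')
| keq_opp a a' : keq a a' -> keq (kopp a) (kopp a')
| keq_assoc a b c : keq (kadd a (kadd b c)) (kadd (kadd a b) c)
| keq_comm a b : keq (kadd a b) (kadd b a)
| keq_0l a : keq (kadd kzero a) a
| keq_oppl a : keq (kadd (kopp a) a) kzero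
| keq_exact (X1 X2 X3 : CObj E) (f : CHom X1 X2) (g : CHom X2 X3) :
    short_exact f g -> keq (kgen X2) (kadd (kgen X1) (kgen X3)).

(* Decorated 0-foams (sign true = +1).                                 *)
Record foam0 (E : exact_cat) := Foam0 {
  pts : finType;
  psgn : pts -> bool;
  pobj : pts -> CObj E
}.

Arguments pts {E} _.
Arguments psgn {E} _ _.
Arguments pobj {E} _ _.
Definition foam0_neg {E} (M : foam0 E) : foam0 E :=
  @Foam0 E (pts M) (fun p => ~~ psgn M p) (pobj M).

Definition foam0_union {E} (M N : foam0 E) : foam0 E :=
  @Foam0 E (pts M + pts N)%type
    (fun p => match p with inl a => psgn M a | inr b => psgn N b end)
    (fun p => match p with inl a => pobj M a | inr b => pobj N b end).

Definition foam0_iso {E} (M N : foam0 E) : Prop :=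
  exists f : pts M -> pts N, bijective f /\
    forall p, psgn N (f p) = psgn M p /\
              isomorphic (proj1_sig (pobj M p)) (proj1_sig (pobj N (f p))).

(* Decorated 1-foams.  Half-edges are pairs (e, b); (e, true) is the   *)
(* end the edge points toward, (e, false) the end it points away from. *)
(* Each end lies at an interior vertex (inl) or a boundary point (inr).*)
(* The flat connection is given by a fiber at each half-edge together  *)
(* with the parallel transport isomorphism along each edge; circle     *)
(* components carry a fiber and a monodromy isomorphism.              *)
Record foam1 (E : exact_cat) := Foam1 {
  fV : finType;
  fE : finType;
  fB : finType;
  fCirc : finType;
  fend : fE * bool -> fV + fB;
  fbedge : fB -> fE * bool;
  fthin1 : fV -> fE * bool;
  fthin2 : fV -> fE * bool;
  fthick : fV -> fE * bool;
  ffib : fE * bool -> CObj E;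
  ftrans : forall e : fE, CHom (ffib (e, false)) (ffib (e, true));
  fcfib : fCirc -> CObj E;
  fcmono : forall c : fCirc, CHom (fcfib c) (fcfib c);
  fses_i : forall v : fV, CHom (ffib (fthin1 v)) (ffib (fthick v));
  fses_p : forall v : fV, CHom (ffib (fthick v)) (ffib (fthin2 v))
}.

Arguments fV {E} _. Arguments fE {E} _. Arguments fB {E} _. Arguments fCirc {E} _.
Arguments fend {E} _ _. Arguments fbedge {E} _ _. Arguments fthin1 {E} _ _.
Arguments fthin2 {E} _ _. Arguments fthick {E} _ _. Arguments ffib {E} _ _.
Arguments ftrans {E} _ _. Arguments fcfib {E} _ _. Arguments fcmono {E} _ _.
Arguments fses_i {E} _ _. Arguments fses_p {E} _ _.
Definition is_foam1 {E} (U : foam1 E) : Prop :=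
  (forall e, is_iso (ftrans U e)) /\
  (forall c, is_iso (fcmono U c)) /\
  (forall b h, (fend U h == inr b) = (h == fbedge U b)) /\
  (forall v, #|[pred h | fend U h == inl v]| = 3) /\
  (forall v, [/\ fend U (fthin1 U v) = inl v, fend U (fthin2 U v) = inl v,
                 fend U (fthick U v) = inl v,
                 fthin1 U v != fthin2 U v &
                 (fthin1 U v != fthick U v) && (fthin2 U v != fthick U v)]) /\
  (forall v, (fthin1 U v).2 = (fthin2 U v).2 /\
             (fthick U v).2 = ~~ (fthin1 U v).2) /\
  (forall v, short_exact (fses_i U v) (fses_p U v)).

Definition foam1_boundary {E} (U : foam1 E) : foam0 E :=
  @Foam0 E (fB U) (fun b => (fbedge U b).2) (fun b => ffib U (fbedge U b)).

Definition cobordant {E} (M0 M1 : foam0 E) : Prop :=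
  exists U : foam1 E, is_foam1 U /\
    foam0_iso (foam1_boundary U) (foam0_union M1 (foam0_neg M0)).

Definition cob_eq {E} : relation (foam0 E) := clos_refl_sym_trans _ (@cobordant E).

Definition gamma0 {E} (M : foam0 E) : kexpr E :=
  foldr (fun p acc => kadd (if psgn M p then kgen (pobj M p)
                            else kopp (kgen (pobj M p))) acc)
        kzero (enum (pts M)).

(* Main.v *)
From HB Require Import structures.
Require Import Defs.
From mathcomp Require Import all_boot all_order all_algebra.
From mathcomp Require Import boolp.
From Stdlib Require Import Relations.
Set Implicit Arguments. Unset Strict Implicit. Unset Printing Implicit Defensive.
Import GRing.Theory.

Arguments keq_trans {E a b c}.
Arguments keq_sym {E a b}.
Arguments keq_add {E a a' b b'}.
Arguments keq_opp {E a a'}.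

Section Quot.
Variable E : exact_cat.
Definition kT := kexpr E.
HB.instance Definition _ := gen_eqMixin kT.
HB.instance Definition _ := gen_choiceMixin kT.

Lemma keq_ex (a : kT) : exists b : kT, `[< keq a b >].
Proof. by exists a; apply/asboolP; apply: keq_refl. Qed.

Definition canon (a : kT) : kT := xchoose (keq_ex a).

Lemma canon_keq a : keq a (canon a).
Proof. exact/asboolP/(xchooseP (keq_ex a)). Qed.

Lemma canon_eq a b : keq a b -> canon a = canon b.
Proof.
move=> ab; apply: eq_xchoose => c; apply/asboolP/asboolP => h.
  exact: keq_trans (keq_sym ab) h.
exact: keq_trans ab h.
Qed.

Lemma canon_idem a : canon (canon a) = canon a.
Proof. apply: canon_eq; apply: keq_sym; exact: canon_keq. Qed.

Definition K := {a : kT | canon a == a}.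
HB.instance Definition _ := Choice.on K.

Definition cls (a : kT) : K := exist _ (canon a) (introT eqP (canon_idem a)).

Lemma cls_eq a b : keq a b -> cls a = cls b.
Proof. by move=> h; apply: val_inj; rewrite /= (canon_eq h). Qed.

Lemma cls_keq a b : cls a = cls b -> keq a b.
Proof.
move=> /(congr1 val) /= h.
apply: keq_trans (canon_keq a) _; rewrite h; apply: keq_sym; exact: canon_keq.
Qed.

Lemma cls_val (x : K) : cls (val x) = x.
Proof. by apply: val_inj => /=; apply/eqP; case: x. Qed.

Lemma keq_val a : keq (val (cls a)) a.
Proof. apply: keq_sym; exact: canon_keq. Qed.

Definition kaddK (x y : K) := cls (kadd (val x) (val y)).
Definition koppK (x : K) := cls (kopp (val x)).
Definition kzeroK := cls kzero.

Lemma kaddE a b : kaddK (cls a) (cls b) = cls (kadd a b).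
Proof. by apply: cls_eq; apply: keq_add; apply: keq_val. Qed.
Lemma koppE a : koppK (cls a) = cls (kopp a).
Proof. by apply: cls_eq; apply: keq_opp; apply: keq_val. Qed.

Lemma clsP (P : K -> Prop) : (forall a, P (cls a)) -> forall x, P x.
Proof. by move=> h x; rewrite -(cls_val x). Qed.

Lemma kaddA : associative kaddK.
Proof.
move=> x y z; elim/clsP: x; elim/clsP: y; elim/clsP: z => c b a.
rewrite !kaddE; apply: cls_eq; exact: keq_assoc.
Qed.
Lemma kaddC : commutative kaddK.
Proof. move=> x y; elim/clsP: x; elim/clsP: y => b a; rewrite !kaddE; apply: cls_eq; exact: keq_comm. Qed.
Lemma kadd0 : left_id kzeroK kaddK.
Proof. move=> x; elim/clsP: x => a; rewrite kaddE; apply: cls_eq; exact: keq_0l. Qed.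
Lemma kaddN : left_inverse kzeroK koppK kaddK.
Proof. move=> x; elim/clsP: x => a; rewrite koppE kaddE; apply: cls_eq; exact: keq_oppl. Qed.

HB.instance Definition _ := GRing.isZmodule.Build K kaddA kaddC kadd0 kaddN.

Local Open Scope ring_scope.
Lemma clsD a b : cls (kadd a b) = cls a + cls b. Proof. by rewrite -kaddE. Qed.
Lemma clsN a : cls (kopp a) = - cls a. Proof. by rewrite -koppE. Qed.
Lemma cls0 : cls kzero = 0. Proof. by []. Qed.
End Quot.

Arguments keq_exact {E X1 X2 X3 f g}.
Section Cat.
Local Open Scope ring_scope.
Variable E : exact_cat.
Notation A := (ambient E).

Lemma compA (w x y z : Obj A) (h : Defs.Hom y z) (g : Defs.Hom x y) (f : Defs.Hom w x) :
  Defs.comp h (Defs.comp g f) = Defs.comp (Defs.comp h g) f.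
Proof. by case: (ambient_abelian E) => H _; apply: H. Qed.
Lemma comp1l (x y : Obj A) (f : Defs.Hom x y) : Defs.comp (idm y) f = f.
Proof. by case: (ambient_abelian E) => _ [H _]; case: (H _ _ f). Qed.
Lemma comp1r (x y : Obj A) (f : Defs.Hom x y) : Defs.comp f (idm x) = f.
Proof. by case: (ambient_abelian E) => _ [H _]; case: (H _ _ f). Qed.
Lemma compDl (x y z : Obj A) (g g' : Defs.Hom y z) (f : Defs.Hom x y) :
  Defs.comp (g + g') f = Defs.comp g f + Defs.comp g' f.
Proof. by case: (ambient_abelian E) => _ [_ [H _]]; case: (H _ _ _ g g' f f). Qed.
Lemma compDr (x y z : Obj A) (g : Defs.Hom y z) (f f' : Defs.Hom x y) :
  Defs.comp g (f + f') = Defs.comp g f + Defs.comp g f'.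
Proof. by case: (ambient_abelian E) => _ [_ [H _]]; case: (H _ _ _ g g f f'). Qed.
Lemma comp0l (x y z : Obj A) (f : Defs.Hom x y) : Defs.comp (0 : Defs.Hom y z) f = 0.
Proof.
have := compDl (0 : Defs.Hom y z) 0 f; rewrite addr0 => h.
by have := congr1 (fun t => t - Defs.comp 0 f) h; rewrite subrr addrK.
Qed.
Lemma comp0r (x y z : Obj A) (g : Defs.Hom y z) : Defs.comp g (0 : Defs.Hom x y) = 0.
Proof.
have := compDr g (0 : Defs.Hom x y) 0; rewrite addr0 => h.
by have := congr1 (fun t => t - Defs.comp g 0) h; rewrite subrr addrK.
Qed.

Lemma idm_iso (x : Obj A) : is_iso (idm x).
Proof. by exists (idm x); rewrite comp1l. Qed.

Lemma iso_sym (x y : Obj A) : isomorphic x y -> isomorphic y x.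
Proof. by case=> f [g [h1 h2]]; exists g; exists f. Qed.

Lemma iso_trans (x y z : Obj A) : isomorphic x y -> isomorphic y z -> isomorphic x z.
Proof.
case=> f [f' [h1 h2]] [g [g' [h3 h4]]]; exists (Defs.comp g f); exists (Defs.comp f' g'); split.
  by rewrite -compA (compA g') h3 comp1l.
by rewrite -compA (compA f) h2 comp1l.
Qed.

Lemma iso_refl (x : Obj A) : isomorphic x x.
Proof. exists (idm x); exact: idm_iso. Qed.

Lemma zero_cls (Z : CObj E) : is_zero_obj (proj1_sig Z) -> cls (kgen Z) = 0.
Proof.
move=> [zl zr].
have ex : short_exact (0 : CHom Z Z) (0 : CHom Z Z).
  split; split; first (by rewrite comp0l); try by rewrite comp0l.
  - move=> W h _; exists 0; split; first by apply: zr.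
    by move=> u' _; apply: zr.
  - move=> W h _; exists 0; split; first by apply: zl.
    by move=> u' _; apply: zl.
have := cls_eq (keq_exact ex); rewrite clsD => h.
by have := congr1 (fun t => t - cls (kgen Z)) h; rewrite subrr addrK.
Qed.

Lemma isoC_cls (X Y : CObj E) : isomorphic (proj1_sig X) (proj1_sig Y) ->
  cls (kgen X) = cls (kgen Y).
Proof.
case=> f [g [gf fg]].
case: (C_zero E) => Z0 [inZ zZ].
pose Z : CObj E := exist _ Z0 inZ.
have ex : short_exact (f : CHom X Y) (0 : CHom Y Z).
  split; split; first (by rewrite comp0l); try by rewrite comp0l.
  - move=> W h _; exists (Defs.comp g h); split; first by rewrite compA fg comp1l.
    by move=> u' <-; rewrite compA gf comp1l.
  - move=> W h hf; exists 0; split.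
      by rewrite comp0l -[h]comp1r -fg compA hf comp0l.
    by move=> u' _; case: zZ => zl _; apply: zl.
have := cls_eq (keq_exact ex); rewrite clsD (@zero_cls Z) // addr0 => <-.
by [].
Qed.
End Cat.

Section Gam.
Local Open Scope ring_scope.
Variable E : exact_cat.

Definition wK (X : CObj E) (s : bool) : K E :=
  if s then cls (kgen X) else - cls (kgen X).
Definition gK (M : foam0 E) : K E := \sum_(p : pts M) wK (pobj M p) (psgn M p).

Lemma cls_gamma M : cls (gamma0 M) = gK M.
Proof.
rewrite /gamma0 /gK -big_enum /=; elim: (enum _) => [|p s IH]; first by rewrite big_nil.
by rewrite big_cons /= clsD IH /wK; case: (psgn M p); rewrite ?clsN.
Qed.

Lemma gK_union M N : gK (foam0_union M N) = gK M + gK N.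
Proof. by rewrite /gK big_sumType. Qed.

Lemma gK_neg M : gK (foam0_neg M) = - gK M.
Proof. rewrite /gK -sumrN; apply: eq_bigr => p _ /=; rewrite /wK; by case: (psgn M p); rewrite ?opprK. Qed.

Lemma gK_iso M N : foam0_iso M N -> gK M = gK N.
Proof.
case=> f [fb h]; rewrite /gK (reindex f); last first.
  by case: fb => g fg gf; exists g => x _.
apply: eq_bigr => p _; case: (h p) => -> hi; rewrite /wK (isoC_cls hi) //.
Qed.

Lemma three_pred (T : finType) (P : pred T) a b c :
  P a -> P b -> P c -> a != b -> (a != c) && (b != c) -> #|P| = 3 ->
  P =i [:: a; b; c].
Proof.
move=> Pa Pb Pc ab /andP[ac bc] cP.
have u : uniq [:: a; b; c] by rewrite /= !inE negb_or ab ac bc.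
have c3 : #|[:: a; b; c]| = 3%N by rewrite (card_uniqP u).
have /subset_cardP : #|[:: a; b; c]| = #|P| by rewrite c3 cP.
have -> : [:: a; b; c] \subset P.
  by apply/subsetP => x; rewrite !inE => /or3P [] /eqP ->.
by move=> /(_ isT) h x; rewrite h.
Qed.

Lemma boundary_zero (U : foam1 E) : is_foam1 U -> gK (foam1_boundary U) = 0.
Proof.
case=> trI [_ [bdP [tri [vP [orP exP]]]]].
pose w (h : fE U * bool) := wK (ffib U h) h.2.
have S0 : \sum_(h : fE U * bool) w h = 0.
  rewrite (_ : \sum_(h : fE U * bool) w h = \sum_(e : fE U) \sum_(b : bool) w (e, b)); last first.
    by rewrite pair_big; apply: eq_bigr => -[].
  rewrite big1 // => e _; rewrite big_bool /w /wK /=.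
  have [g gi] := trI e.
  by rewrite (@isoC_cls _ (ffib U (e, false)) (ffib U (e, true))) ?subrr //; exists (Defs.ftrans U e).
rewrite (partition_big (fend U) xpredT) // big_sumType /= in S0.
rewrite big1 ?add0r in S0; last first.
  move=> v _; case: (vP v) => e1 e2 ek n12 /andP[n1k n2k].
  have H := @three_pred _ [pred h | fend U h == inl v] _ _ _ (introT eqP e1) (introT eqP e2) (introT eqP ek) n12 (introT andP (conj n1k n2k)) (tri v).
  rewrite (eq_bigl (fun h => h \in [:: fthin1 U v; fthin2 U v; fthick U v])); last first.
    by move=> h; rewrite -H.
  rewrite -big_uniq /=; last by rewrite !inE negb_or n12 n1k n2k.
  rewrite !big_cons big_nil /w addr0.
  have [o1 ok] := orP v.
  have ex := cls_eq (keq_exact (exP v)); rewrite clsD in ex.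
  rewrite /wK ok -o1; case: (fthin1 U v).2 => /=; rewrite ex.
    by rewrite addrA subrr.
  by rewrite addrCA addKr addNr.
rewrite -S0 /gK; apply: eq_bigr => b _.
rewrite (big_pred1 (fbedge U b)) // => h; by rewrite /= bdP.
Qed.
End Gam.

Section Iso.
Variable E : exact_cat.
Implicit Types M N : foam0 E.

Lemma bij_iso M N (f : pts M -> pts N) (g : pts N -> pts M) :
  cancel f g -> cancel g f ->
  (forall p, psgn N (f p) = psgn M p) -> (forall p, pobj N (f p) = pobj M p) ->
  foam0_iso M N.
Proof.
move=> fg gf hs ho; exists f; split; first by exists g.
by move=> p; rewrite hs ho; split => //; apply: iso_refl.
Qed.

Lemma iso0_refl M : foam0_iso M M.
Proof. by apply: (@bij_iso _ _ id id). Qed.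

Lemma iso0_sym M N : foam0_iso M N -> foam0_iso N M.
Proof.
case=> f [[g fg gf] h]; exists g; split; first by exists f.
move=> q; case: (h (g q)); rewrite gf => -> hi; split => //; exact: iso_sym.
Qed.

Lemma iso0_trans M N P : foam0_iso M N -> foam0_iso N P -> foam0_iso M P.
Proof.
case=> f [[f' ff' f'f] h] [g [[g' gg' g'g] k]]; exists (g \o f); split.
  by exists (f' \o g') => x /=; rewrite ?gg' ?ff' ?f'f ?g'g.
move=> p /=; case: (h p) => h1 h2; case: (k (f p)) => k1 k2; split.
  by rewrite k1.
exact: iso_trans h2 k2.
Qed.

Lemma iso0_union M M' N N' : foam0_iso M M' -> foam0_iso N N' ->
  foam0_iso (foam0_union M N) (foam0_union M' N').
Proof.
case=> f [[f' ff' f'f] h] [g [[g' gg' g'g] k]].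
exists (fun p => match p with inl a => inl (f a) | inr b => inr (g b) end); split.
  exists (fun p => match p with inl a => inl (f' a) | inr b => inr (g' b) end).
    by case=> x; rewrite ?ff' ?gg'.
  by case=> x; rewrite ?f'f ?g'g.
by case=> x /=; [apply: h | apply: k].
Qed.

Lemma iso0_neg M N : foam0_iso M N -> foam0_iso (foam0_neg M) (foam0_neg N).
Proof.
case=> f [fb h]; exists f; split => // p /=; case: (h p) => -> ?; split => //.
Qed.

Lemma iso0_comm M N : foam0_iso (foam0_union M N) (foam0_union N M).
Proof.
apply: (@bij_iso (foam0_union M N) (foam0_union N M)
   (fun p : (pts M + pts N)%type => match p with inl a => inr a | inr b => inl b end)
   (fun p : (pts N + pts M)%type => match p with inl a => inr a | inr b => inl b end)) => //; by case.
Qed.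

Lemma iso0_assoc M N P : foam0_iso (foam0_union M (foam0_union N P))
                                 (foam0_union (foam0_union M N) P).
Proof.
apply: (@bij_iso (foam0_union M (foam0_union N P)) (foam0_union (foam0_union M N) P)
   (fun p : (pts M + (pts N + pts P))%type => match p with inl a => inl (inl a) | inr (inl b) => inl (inr b)
                                        | inr (inr c) => inr c end)
                     (fun p : ((pts M + pts N) + pts P)%type => match p with inl (inl a) => inl a | inl (inr b) => inr (inl b)
                                        | inr c => inr (inr c) end)); by do ![case].
Qed.

Definition foam0_empty : foam0 E := @Foam0 E void (fun _ => true) (fun v => match v with end).

Lemma iso0_0l M : foam0_iso (foam0_union foam0_empty M) M.
Proof.
apply: (@bij_iso (foam0_union foam0_empty M) M
   (fun p : (void + pts M)%type => match p with inl a => match a with end | inr b => b end)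
   (fun p => inr p)) => //; by do ![case].
Qed.

Lemma iso0_0r M : foam0_iso (foam0_union M foam0_empty) M.
Proof. exact: iso0_trans (iso0_comm _ _) (iso0_0l _). Qed.

Lemma iso0_negneg M : foam0_iso (foam0_neg (foam0_neg M)) M.
Proof. by apply: (@bij_iso (foam0_neg (foam0_neg M)) M id id) => // p /=; rewrite negbK. Qed.

Lemma iso0_negU M N : foam0_iso (foam0_neg (foam0_union M N))
                                (foam0_union (foam0_neg M) (foam0_neg N)).
Proof.
exists (fun p => p); split; first by exists (fun p => p).
by case=> p; split => //; apply: iso_refl.
Qed.

Lemma iso0_neg0 : foam0_iso (foam0_neg foam0_empty) foam0_empty.
Proof.
exists (fun p => p); split; first by exists (fun p => p).
by case.
Qed.

Lemma iso0_swap4 M N P Q :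
  foam0_iso (foam0_union (foam0_union M N) (foam0_union P Q))
            (foam0_union (foam0_union M P) (foam0_union N Q)).
Proof.
pose s (T1 T2 T3 T4 : Type) (p : (T1 + T2) + (T3 + T4)) : (T1 + T3) + (T2 + T4) :=
  match p with inl (inl a) => inl (inl a) | inl (inr b) => inr (inl b)
             | inr (inl c) => inl (inr c) | inr (inr d) => inr (inr d) end.
by apply: (@bij_iso (foam0_union (foam0_union M N) (foam0_union P Q)) (foam0_union (foam0_union M P) (foam0_union N Q)) (@s _ _ _ _) (@s _ _ _ _)); do ![case].
Qed.
End Iso.

Section SFoam.
Variable E : exact_cat.

Unset Implicit Arguments.
Record sfoam := SFoam {
  sV : finType; sE : finType; sB : finType;
  send : sE * bool -> sV + sB;
  sbedge : sB -> sE * bool;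
  st1 : sV -> sE * bool; st2 : sV -> sE * bool; stk : sV -> sE * bool;
  sfib : sE -> CObj E;
  si : forall v, CHom (sfib (st1 v).1) (sfib (stk v).1);
  sp : forall v, CHom (sfib (stk v).1) (sfib (st2 v).1)
}.
Set Implicit Arguments.

Definition svalid (S : sfoam) : Prop :=
  [/\ (forall b h, (send S h == inr b) = (h == sbedge S b)),
      (forall v, (send S (st1 S v) = inl v /\ send S (st2 S v) = inl v /\ send S (stk S v) = inl v)),
      (forall v h, send S h = inl v -> (h = st1 S v \/ h = st2 S v \/ h = stk S v))
    & ((forall v, (st1 S v != st2 S v /\ st1 S v != stk S v /\ st2 S v != stk S v)) /\ (forall v, (st1 S v).2 = (st2 S v).2 /\ (stk S v).2 = ~~ (st1 S v).2)
       /\ (forall v, short_exact (si S v) (sp S v)))].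

Definition to_foam1 (S : sfoam) : foam1 E :=
  @Foam1 E (sV S) (sE S) (sB S) void (send S) (sbedge S) (st1 S) (st2 S) (stk S)
    (fun h => sfib S h.1) (fun e => idm _) (fun c => match c with end)
    (fun c => match c with end) (si S) (sp S).

Lemma to_foam1_valid S : svalid S -> is_foam1 (to_foam1 S).
Proof.
case=> bd ends all3 [dist [orr ex]].
split; first by move=> e; apply: idm_iso.
split; first by case.
split; first exact: bd.
split.
  move=> v; case: (ends v) => e1 [e2 ek]; case: (dist v) => n12 [n1k n2k].
  have u : uniq [:: st1 S v; st2 S v; stk S v] by rewrite /= !inE negb_or n12 n1k n2k.
  rewrite -[3%N]/(size [:: st1 S v; st2 S v; stk S v]) -(card_uniqP u).
rewrite natn; apply: eq_card => h; rewrite !inE /=.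
  apply/eqP/or3P => [/all3 [->|[->|->]] | [] /eqP ->] //; by [apply: Or31 | apply: Or32 | apply: Or33].
split.
  move=> v; case: (ends v) => e1 [e2 ek]; case: (dist v) => n12 [n1k n2k].
  by split => //=; rewrite n1k n2k.
by split.
Qed.

Definition snull (M : foam0 E) : Prop :=
  exists S, svalid S /\ foam0_iso (foam1_boundary (to_foam1 S)) M.

Lemma snull_nullb M : snull M -> exists U : foam1 E, is_foam1 U /\ foam0_iso (foam1_boundary U) M.
Proof. by case=> S [v i]; exists (to_foam1 S); split => //; apply: to_foam1_valid. Qed.

Lemma snull_iso M N : snull M -> foam0_iso M N -> snull N.
Proof. by case=> S [v i] h; exists S; split => //; apply: iso0_trans h. Qed.
End SFoam.

Arguments sV {E} _. Arguments sE {E} _. Arguments sB {E} _. Arguments send {E} _ _.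
Arguments sbedge {E} _ _. Arguments st1 {E} _ _. Arguments st2 {E} _ _. Arguments stk {E} _ _.
Arguments sfib {E} _ _. Arguments si {E} _ _. Arguments sp {E} _ _.
Section SUnion.
Variable E : exact_cat.
Variables S T : sfoam E.

Definition uV := (sV S + sV T)%type.
Definition uE := (sE S + sE T)%type.
Definition uB := (sB S + sB T)%type.
Definition hl (h : sE S * bool) : uE * bool := (inl h.1, h.2).
Definition hr (h : sE T * bool) : uE * bool := (inr h.1, h.2).
Definition liftS (x : sV S + sB S) : uV + uB :=
  match x with inl v => inl (inl v) | inr b => inr (inl b) end.
Definition liftT (x : sV T + sB T) : uV + uB :=
  match x with inl v => inl (inr v) | inr b => inr (inr b) end.
Definition usend (h : uE * bool) : uV + uB :=
  match h.1 with inl e => liftS (send S (e, h.2)) | inr e => liftT (send T (e, h.2)) end.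
Definition ubedge (b : uB) : uE * bool :=
  match b with inl b => hl (sbedge S b) | inr b => hr (sbedge T b) end.
Definition ut1 (v : uV) := match v with inl v => hl (st1 S v) | inr v => hr (st1 T v) end.
Definition ut2 (v : uV) := match v with inl v => hl (st2 S v) | inr v => hr (st2 T v) end.
Definition utk (v : uV) := match v with inl v => hl (stk S v) | inr v => hr (stk T v) end.
Definition ufib (e : uE) := match e with inl e => sfib S e | inr e => sfib T e end.
Definition usi (v : uV) : CHom (ufib (ut1 v).1) (ufib (utk v).1) :=
  match v as v return CHom (ufib (ut1 v).1) (ufib (utk v).1) with
  | inl v => si S v | inr v => si T v end.
Definition usp (v : uV) : CHom (ufib (utk v).1) (ufib (ut2 v).1) :=
  match v as v return CHom (ufib (utk v).1) (ufib (ut2 v).1) with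
  | inl v => sp S v | inr v => sp T v end.

Definition sunion : sfoam E :=
  @SFoam E uV uE uB usend ubedge ut1 ut2 utk ufib usi usp.
End SUnion.

Section SUnionValid.
Variable E : exact_cat.
Variables S T : sfoam E.

Lemma hl_eq (h h' : sE S * bool) : (hl T h == hl T h') = (h == h').
Proof. by case: h => e b; case: h' => e' b'; rewrite /hl /= !xpair_eqE. Qed.
Lemma hr_eq (h h' : sE T * bool) : (hr S h == hr S h') = (h == h').
Proof. by case: h => e b; case: h' => e' b'; rewrite /hr /= !xpair_eqE. Qed.
Lemma hlr_eq (h : sE S * bool) h' : (hl T h == hr S h') = false.
Proof. by rewrite /hl /hr xpair_eqE. Qed.
Lemma hrl_eq (h : sE T * bool) h' : (hr S h == hl T h') = false.
Proof. by rewrite /hl /hr xpair_eqE. Qed.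
Lemma usend_hl h : usend (hl T h) = liftS T (send S h).
Proof. by case: h. Qed.
Lemma usend_hr h : usend (hr S h) = liftT S (send T h).
Proof. by case: h. Qed.

Lemma sunion_valid : svalid S -> svalid T -> svalid (sunion S T).
Proof.
case=> bd1 en1 al1 [di1 [or1 ex1]] [bd2 en2 al2 [di2 [or2 ex2]]].
split.
- move=> [b|b] [[e|e] c].
  + rewrite -[(inl e, c)]/(hl T (e, c)) /= usend_hl hl_eq -bd1.
    by case: (send S (e, c)).
  + rewrite -[(inr e, c)]/(hr S (e, c)) /= usend_hr hrl_eq.
    by case: (send T (e, c)).
  + rewrite -[(inl e, c)]/(hl T (e, c)) /= usend_hl hlr_eq.
    by case: (send S (e, c)).
  + rewrite -[(inr e, c)]/(hr S (e, c)) /= usend_hr hr_eq -bd2.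
    by case: (send T (e, c)).
- by move=> [v|v] /=; rewrite ?usend_hl ?usend_hr;
    [case: (en1 v) => -> [-> ->] | case: (en2 v) => -> [-> ->]].
- move=> [v|v] [[e|e] c].
  + rewrite -[(inl e, c)]/(hl T (e, c)) /= usend_hl.
    case eq: (send S (e, c)) => [w|w] //= [<-].
    by case: (al1 _ _ eq) => [->|[->|->]]; [left | right; left | right; right].
  + rewrite -[(inr e, c)]/(hr S (e, c)) /= usend_hr.
    by case: (send T (e, c)).
  + rewrite -[(inl e, c)]/(hl T (e, c)) /= usend_hl.
    by case: (send S (e, c)).
  + rewrite -[(inr e, c)]/(hr S (e, c)) /= usend_hr.
    case eq: (send T (e, c)) => [w|w] //= [<-].
    by case: (al2 _ _ eq) => [->|[->|->]]; [left | right; left | right; right].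
split.
  by move=> [v|v] /=; rewrite ?hl_eq ?hr_eq; [case: (di1 v) | case: (di2 v)].
split.
  by move=> [v|v]; [apply: or1 | apply: or2].
by move=> [v|v]; [apply: ex1 | apply: ex2].
Qed.

Lemma sunion_bd : foam0_iso (foam1_boundary (to_foam1 (sunion S T)))
  (foam0_union (foam1_boundary (to_foam1 S)) (foam1_boundary (to_foam1 T))).
Proof.
exists (fun p => p); split; first by exists (fun p => p).
by case=> b; split => //; apply: iso_refl.
Qed.
End SUnionValid.

Section Cyl.
Variable E : exact_cat.
Variable M : foam0 E.

Definition cyl : sfoam E :=
  @SFoam E void (pts M) (pts M + pts M)%type
   (fun h => inr (if h.2 == psgn M h.1 then inl h.1 else inr h.1))
   (fun b => match b with inl p => (p, psgn M p) | inr p => (p, ~~ psgn M p) end)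
   (fun v => match v with end) (fun v => match v with end) (fun v => match v with end)
   (pobj M) (fun v => match v with end) (fun v => match v with end).

Lemma cyl_valid : svalid cyl.
Proof.
split; try by case.
- move=> [q|q] [p c] /=; rewrite !xpair_eqE.
  + case: (p =P q) => [<-|ne] /=.
      by case: (c == psgn M p); apply/eqP => // -[].
    by case: ifP => _; apply/eqP => // -[] [] /ne.
  + case: (p =P q) => [<-|ne] /=.
      by case: c; case: (psgn M p) => /=; apply/eqP => // -[].
    by case: ifP => _; apply/eqP => // -[] [] /ne.
- by split; [case | split; case].
Qed.

Lemma snull_cyl : snull (foam0_union M (foam0_neg M)).
Proof.
exists cyl; split; first exact: cyl_valid.
exists (fun p => p); split; first by exists (fun p => p).
by case=> b; split => //; apply: iso_refl.
Qed.
End Cyl.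

Section Vert.
Variable E : exact_cat.
Variables X1 X2 X3 : CObj E.
Variable f : CHom X1 X2.
Variable g : CHom X2 X3.
Hypothesis ex : short_exact f g.

Definition VB := ((unit + unit) + unit)%type.
Definition vsign (b : VB) := match b with inl _ => true | inr _ => false end.
Definition vfib (b : VB) : CObj E :=
  match b with inl (inl _) => X1 | inl (inr _) => X3 | inr _ => X2 end.

Definition vert : sfoam E :=
  @SFoam E unit VB VB
   (fun h => if h.2 == vsign h.1 then inr h.1 else inl tt)
   (fun b => (b, vsign b))
   (fun _ => (inl (inl tt), false)) (fun _ => (inl (inr tt), false)) (fun _ => (inr tt, true))
   vfib (fun _ => f) (fun _ => g).

Definition single (X : CObj E) : foam0 E := @Foam0 E unit (fun _ => true) (fun _ => X).

Lemma vert_valid : svalid vert.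
Proof.
split.
- move=> b' [b c] /=.
  by case: b' => [[[]|[]]|[]]; case: b => [[[]|[]]|[]]; case: c.
- by case.
- move=> [] [b c] /=.
  by case: b => [[[]|[]]|[]]; case: c => //= _; [left | right; left | right; right].
split; first by case.
split; first by case.
by case.
Qed.

Lemma snull_vert : snull (foam0_union (foam0_union (single X1) (single X3)) (foam0_neg (single X2))).
Proof.
exists vert; split; first exact: vert_valid.
exists (fun p => p); split; first by exists (fun p => p).
by case=> [[[]|[]]|[]]; split => //; apply: iso_refl.
Qed.
End Vert.

Section Rel.
Variable E : exact_cat.
Implicit Types M N : foam0 E.

Definition cobS M0 M1 := snull (foam0_union M1 (foam0_neg M0)).
Definition R := clos_refl_sym_trans _ cobS.

Lemma snull_union M N : snull M -> snull N -> snull (foam0_union M N).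
Proof.
case=> S [vS iS] [T [vT iT]]; exists (sunion S T); split; first exact: sunion_valid.
exact: iso0_trans (sunion_bd S T) (iso0_union iS iT).
Qed.

Lemma R_cob M N : R M N -> cob_eq M N.
Proof.
elim=> [x y h|x|x y _ h|x y z _ h1 _ h2].
- by apply: rst_step; apply: snull_nullb.
- exact: rst_refl.
- exact: rst_sym.
- exact: rst_trans h1 h2.
Qed.

Lemma R_iso M N : foam0_iso M N -> R M N.
Proof.
move=> h; apply: rst_step; apply: snull_iso (snull_cyl M) _.
exact: iso0_union h (iso0_refl _).
Qed.

Lemma R_unionl M M' N : R M M' -> R (foam0_union M N) (foam0_union M' N).
Proof.
elim=> [x y h|x|x y _ h|x y z _ h1 _ h2].
- apply: rst_step; apply: snull_iso (snull_union h (snull_cyl N)) _.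
  apply: iso0_trans (iso0_swap4 _ _ _ _) _.
  exact: iso0_union (iso0_refl _) (iso0_sym (iso0_negU _ _)).
- exact: rst_refl.
- exact: rst_sym.
- exact: rst_trans h1 h2.
Qed.

Lemma R_unionr M N N' : R N N' -> R (foam0_union M N) (foam0_union M N').
Proof.
move=> h; apply: rst_trans (R_iso (iso0_comm _ _)) _.
apply: rst_trans (R_unionl _ h) _; exact: R_iso (iso0_comm _ _).
Qed.

Lemma R_neg M N : R M N -> R (foam0_neg M) (foam0_neg N).
Proof.
elim=> [x y h|x|x y _ h|x y z _ h1 _ h2].
- apply: rst_sym; apply: rst_step; apply: snull_iso h _.
  apply: iso0_trans (iso0_comm _ _) _.
  exact: iso0_union (iso0_refl _) (iso0_sym (iso0_negneg _)).
- exact: rst_refl.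
- exact: rst_sym.
- exact: rst_trans h1 h2.
Qed.

Fixpoint phi (a : kexpr E) : foam0 E :=
  match a with
  | kgen X => single X
  | kzero => foam0_empty E
  | kadd a b => foam0_union (phi a) (phi b)
  | kopp a => foam0_neg (phi a)
  end.

Lemma keq_R a b : keq a b -> R (phi a) (phi b).
Proof.
elim=> {a b} /=.
- move=> a; exact: rst_refl.
- move=> a b _ h; exact: rst_sym.
- move=> a b c _ h1 _ h2; exact: rst_trans h1 h2.
- move=> a a' b b' _ h1 _ h2; exact: rst_trans (R_unionl _ h1) (R_unionr _ h2).
- move=> a a' _ h; exact: R_neg.
- move=> a b c; exact: R_iso (iso0_assoc _ _ _).
- move=> a b; exact: R_iso (iso0_comm _ _).
- move=> a; exact: R_iso (iso0_0l _).
- move=> a; apply: rst_sym; apply: rst_step.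
  apply: snull_iso (snull_cyl (foam0_neg (phi a))) _.
  apply: iso0_trans (iso0_union (iso0_refl _) (iso0_negneg _)) _.
  apply: iso0_sym; apply: iso0_trans (iso0_union (iso0_refl _) (iso0_neg0 E)) _.
  exact: iso0_0r.
- move=> X1 X2 X3 f g ex; apply: rst_step; exact: snull_vert ex.
Qed.
End Rel.

Section NF.
Variable E : exact_cat.
Implicit Types M N : foam0 E.
Local Open Scope ring_scope.

Lemma gK_single (X : CObj E) : gK (single X) = cls (kgen X).
Proof. by rewrite /gK (big_pred1 tt) //; case. Qed.

Lemma gK_phi (a : kexpr E) : gK (phi a) = cls a.
Proof.
elim: a => [X||a IHa b IHb|a IHa] /=.
- exact: gK_single.
- by rewrite /gK big_pred0 //; case.
- by rewrite gK_union IHa IHb clsD.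
- by rewrite gK_neg IHa clsN.
Qed.

Lemma nf n M : #|pts M| = n -> exists a, gK M = cls a /\ R M (phi a).
Proof.
elim: n M => [|n IH] M cM.
  have F : pts M -> False.
    by move=> p; have := card0_eq cM p; rewrite !inE.
  exists kzero; split.
    by rewrite /gK big_pred0 // => p; case: (F p).
  apply: R_iso; exists (fun p => False_rect void (F p)); split.
    by exists (fun v : void => match v with end) => [p|[]]; case: (F p).
  by move=> p; case: (F p).
have [p _] : exists p : pts M, p \in pts M.
  by apply/card_gt0P; rewrite cM.
pose M' := @Foam0 E {q : pts M | q != p} (fun q => psgn M (val q)) (fun q => pobj M (val q)).
pose Tp := @Foam0 E unit (fun _ => psgn M p) (fun _ => pobj M p).
have cM' : #|pts M'| = n.
  rewrite /= card_sig; move: cM; rewrite (cardD1 p) inE add1n => -[<-].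
  by apply: eq_card => q; rewrite !inE andbT.
have [a' [ga' Ra']] := IH M' cM'.
have iM : foam0_iso M (foam0_union Tp M').
  pose fwd (q : pts M) : pts (foam0_union Tp M') :=
    match insub q with Some s => inr s | None => inl tt end.
  pose bwd (x : pts (foam0_union Tp M')) : pts M :=
    match x with inl _ => p | inr s => val s end.
  apply: (@bij_iso _ M (foam0_union Tp M') fwd bwd).
  - move=> q; rewrite /fwd /bwd; case: insubP => [s _ <-|] //.
    by rewrite negbK => /eqP.
  - case=> [[]|s]; rewrite /fwd /bwd /=.
      by rewrite insubN // negbK.
    by rewrite valK.
  - move=> q; rewrite /fwd; case: insubP => [s _ <-|] //.
    by rewrite negbK => /eqP ->.
  - move=> q; rewrite /fwd; case: insubP => [s _ <-|] //.
    by rewrite negbK => /eqP ->.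
pose t := if psgn M p then kgen (pobj M p) else kopp (kgen (pobj M p)).
exists (kadd t a'); split.
  rewrite (gK_iso iM) gK_union ga' clsD; congr (_ + _).
  rewrite /gK (big_pred1 tt); last by case.
  rewrite /t /wK /=; by case: (psgn M p); rewrite ?clsN.
apply: rst_trans (R_iso iM) _.
apply: rst_trans (R_unionr _ Ra') _; apply: R_unionl.
apply: R_iso; rewrite /t; case eq: (psgn M p) => /=.
  exists (fun x => x); split; first by exists (fun x => x).
  by move=> q /=; rewrite eq; split => //; apply: iso_refl.
exists (fun x => x); split; first by exists (fun x => x).
by move=> q /=; rewrite eq; split => //; apply: iso_refl.
Qed.
End NF.

Theorem mainTheorem5 (E : exact_cat) :
  [/\ (* well-defined on Cob_0 *)
      (forall M N : foam0 E, cob_eq M N -> keq (gamma0 M) (gamma0 N)),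
      (* additive: disjoint union goes to sum *)
      (forall M N : foam0 E,
         keq (gamma0 (foam0_union M N)) (kadd (gamma0 M) (gamma0 N))),
      (* injective *)
      (forall M N : foam0 E, keq (gamma0 M) (gamma0 N) -> cob_eq M N)
    & (* surjective *)
      (forall x : kexpr E, exists M : foam0 E, keq (gamma0 M) x)].
Proof.
split.
- move=> M N h; apply: cls_keq; rewrite !cls_gamma.
  elim: h => [x y [U [vU iU]]|x|x y _ h|x y z _ h1 _ h2] //.
  + have := boundary_zero vU; rewrite (gK_iso iU) gK_union gK_neg => /eqP.
    by rewrite subr_eq0 => /eqP.
  + by rewrite h1 h2.
- move=> M N; apply: cls_keq; by rewrite clsD !cls_gamma gK_union.
- move=> M N h.
  have [a [ga Ra]] := nf (erefl #|pts M|).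
  have [b [gb Rb]] := nf (erefl #|pts N|).
  have := cls_eq h; rewrite !cls_gamma ga gb => /cls_keq /keq_R Rab.
  apply: R_cob; apply: rst_trans Ra _; apply: rst_trans Rab _; exact: rst_sym.
- move=> x; exists (phi x); apply: cls_keq; by rewrite cls_gamma gK_phi.
Qed.
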